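(* Let $P$ be a fixed tree poset with $|P|$ elements. For all integers $q\geq1$ and reals $\varepsilon>0$ there exists $\delta>0$ such that the following holds. If $\mathcal{F}\subseteq\widetilde{\mathcal{B}}_n$ satisfies $\mu(\mathcal{F})\geq q-1+\varepsilon$, then there exists a nested sequence $\mathcal{M}^{|P|}\subseteq\mathcal{M}^{|P|-1}\subseteq\cdots\subseteq\mathcal{M}^0$ of families of $q$-marked chains with markers from $\mathcal{F}$ such that for all $j\in[|P|]$: - for each $(\chi,Q)\in\mathcal{M}^j$ and $F\in Q$, $F$ is $\delta$-robust with respect to $\mathcal{M}^{j-1}$; - for each $i\in[q]$, $|\mathcal{L}^i(\mathcal{M}^j)|\geq\frac{2\varepsilon}{3q}\min_{F\in\mathcal{F}}\binom{n}{|F|}$.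
   Context: $\widetilde{\mathcal{B}}_n=\{F\subseteq[n]: |\,|F|-n/2\,|<2\sqrt{n\ln n}\}$. $\mu(\mathcal{F})=\sum_{F\in\mathcal{F}}1/\binom{n}{|F|}$ (Lubell weight). $\mathcal{C}$ is the set of full chains $\emptyset=C_0\subsetneq\cdots\subsetneq C_n=[n]$ (identified with their member sets). A $q$-chain is $(F_1,\dots,F_q)$ with $F_1\supsetneq\cdots\supsetneq F_q$, $F_i$ being its $i$-th member; a $q$-marked chain with markers from $\mathcal{F}$ is $(\chi,Q)$ with $\chi\in\mathcal{C}$ and $Q$ a $q$-chain of members of $\mathcal{F}$ lying on $\chi$. For a family $\mathcal{M}$ of $q$-marked chains, $\mathcal{L}^i(\mathcal{M})$ is the set of $D$ that are the $i$-th member of $Q$ for some $(\chi,Q)\in\mathcal{M}$, and $\mathcal{M}(F,i)$ is the set of $(\chi,Q)\in\mathcal{M}$ with $F$ the $i$-th member of $Q$. With $\chi_0$ a uniformly random full chain: $F$ is $(i,\delta)$-lower bad w.r.t. $\mathcal{M}$ if $\mathcal{M}(F,i)\neq\emptyset$ and there is $\mathcal{W}\subseteq2^{[n]}$ with (a) $D\subseteq F$ for all $D\in\mathcal{W}$, (b) $Q\cap\mathcal{W}\neq\emptyset$ for all $(\chi,Q)\in\mathcal{M}(F,i)$, (c) $\Pr[\chi_0\cap\mathcal{W}\neq\emptyset\mid F\in\chi_0]\le\delta$; $(i,\delta)$-upper bad is defined identically with $D\supseteq F$ in (a). $F$ is $\delta$-robust w.r.t. $\mathcal{M}$ if for all $i\in[q]$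 it is neither $(i,\delta)$-lower bad nor $(i,\delta)$-upper bad. *)

(* Defs.v *)
From HB Require Import structures.
From mathcomp Require Import all_boot all_order all_algebra.
From mathcomp Require Import reals exp.
Set Implicit Arguments. Unset Strict Implicit. Unset Printing Implicit Defensive.
Import Order.TTheory GRing.Theory Num.Theory.
Local Open Scope ring_scope.

Section Tree.
Context {d : Order.disp_t} {P : finPOrderType d}.
Definition covers (x y : P) : bool :=
  ((x < y)%O && [forall z : P, ~~ ((x < z)%O && (z < y)%O)]).
Definition hasse_adj (x y : P) : bool := covers x y || covers y x.
Definition tree_poset : Prop :=
  [/\ (0 < #|P|)%N,
      forall x y : P, connect hasse_adj x y
    & forall c : seq P, (2 < size c)%N -> ~ ucycle hasse_adj c].
End Tree.

Section Chains.
Variable R : realType.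
Variable n : nat.
Notation setn := {set 'I_n}.

Definition Btilde : {set setn} :=
  [set A : setn | `|(#|A|%:R : R) - n%:R / 2| < 2 * Num.sqrt (n%:R * ln (n%:R : R))].

Definition lubell (F : {set setn}) : R := \sum_(A in F) ('C(n, #|A|)%:R)^-1.

(* full chain emptyset = C_0 < C_1 < ... < C_n = [n], as its set of members:
   exactly one member of each size 0..n, totally ordered by inclusion *)
Definition full_chain (c : {set setn}) : bool :=
  [forall k : 'I_n.+1, #|[set A in c | #|A| == k]| == 1%N] &&
  [forall A in c, forall B in c, (A \subset B) || (B \subset A)].

Variable q : nat.
(* q-chain (F_1,...,F_q), F_1 ⊋ ... ⊋ F_q; index i : 'I_q stands for i+1 *)
Definition qchain (Q : {ffun 'I_q -> setn}) : bool :=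
  [forall i : 'I_q, forall j : 'I_q, (i < j)%N ==> (Q j \proper Q i)].

Definition mchain := ({set setn} * {ffun 'I_q -> setn})%type.

Definition marked_chain (F : {set setn}) (m : mchain) : bool :=
  [&& full_chain m.1, qchain m.2 & [forall i, (m.2 i \in F) && (m.2 i \in m.1)]].

Definition Lset (M : {set mchain}) (i : 'I_q) : {set setn} :=
  [set D : setn | [exists m in M, m.2 i == D]].

Definition Mat (M : {set mchain}) (F : setn) (i : 'I_q) : {set mchain} :=
  [set m in M | m.2 i == F].

(* Pr[chi_0 ∩ W ≠ ∅ | F ∈ chi_0], chi_0 a uniformly random full chain *)
Definition cond_prob (W : {set setn}) (F : setn) : R :=
  (#|[set c : {set setn} | [&& full_chain c, F \in c & [exists D in W, D \in c]]]|%:R)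
  / (#|[set c : {set setn} | full_chain c && (F \in c)]|%:R).

Definition lower_bad (i : 'I_q) (delta : R) (M : {set mchain}) (F : setn) : Prop :=
  Mat M F i != set0 /\
  exists W : {set setn},
    [/\ forall D, D \in W -> D \subset F,
        forall m, m \in Mat M F i -> exists j : 'I_q, m.2 j \in W
      & cond_prob W F <= delta].

Definition upper_bad (i : 'I_q) (delta : R) (M : {set mchain}) (F : setn) : Prop :=
  Mat M F i != set0 /\
  exists W : {set setn},
    [/\ forall D, D \in W -> F \subset D,
        forall m, m \in Mat M F i -> exists j : 'I_q, m.2 j \in W
      & cond_prob W F <= delta].

Definition robust (delta : R) (M : {set mchain}) (F : setn) : Prop :=
  forall i : 'I_q, ~ lower_bad i delta M F /\ ~ upper_bad i delta M F.

(* min_{A in F} binom(n, |A|); the neutral element 'C(n, n/2) is the largest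
   binomial coefficient, so for nonempty F this is exactly the minimum *)
Definition min_binom (F : {set setn}) : nat :=
  \big[minn/'C(n, n./2)]_(A in F) 'C(n, #|A|).
End Chains.

(* Main.v *)
Require Import Defs.
From HB Require Import structures.
From mathcomp Require Import all_boot all_order all_algebra.
From mathcomp Require Import reals exp.
From mathcomp Require Import all_fingroup zify ring lra.
Import Order.TTheory GRing.Theory Num.Theory.
Set Implicit Arguments. Unset Strict Implicit. Unset Printing Implicit Defensive.


Section Comb.
Variable n : nat.
Notation setn := {set 'I_n}.

Definition cc (A : setn) : nat := #|[set c : {set setn} | full_chain c && (A \in c)]|.
Definition NN : nat := #|[set c : {set setn} | full_chain c]|.

Lemma card_le_n (A : setn) : (#|A| <= n)%N.
Proof. by rewrite -[X in (_ <= X)%N](card_ord n) max_card. Qed.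

Lemma full_one (c : {set setn}) k : full_chain c -> (k <= n)%N ->
  #|[set X in c | #|X| == k]| = 1%N.
Proof.
case/andP=> /forallP H _ kn.
have := H (Ordinal (kn : (k < n.+1)%N)). by move/eqP.
Qed.

Lemma full_eq_size (c : {set setn}) A B : full_chain c -> A \in c -> B \in c ->
  #|A| = #|B| -> A = B.
Proof.
move=> fc Ac Bc eAB.
have := full_one fc (card_le_n A).
move/eqP/cards1P=> [x Hx].
have : A \in [set X in c | #|X| == #|A|] by rewrite inE Ac eqxx.
have : B \in [set X in c | #|X| == #|A|] by rewrite inE Bc eAB eqxx.
by rewrite Hx !inE => /eqP -> /eqP ->.
Qed.

Lemma full_cmp (c : {set setn}) A B : full_chain c -> A \in c -> B \in c ->
  (A \subset B) || (B \subset A).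
Proof.
case/andP=> _ /forall_inP H Ac Bc. exact: (forall_inP (H A Ac) B Bc).
Qed.

Definition pimg (s : {perm 'I_n}) (A : setn) : setn := [set s x | x in A].
Definition cimg (s : {perm 'I_n}) (c : {set setn}) : {set setn} := [set pimg s A | A in c].

Lemma pimg_inj s : injective (pimg s).
Proof. exact: imset_inj (@perm_inj _ s). Qed.

Lemma cimg_inj s : injective (cimg s).
Proof. exact: imset_inj (@pimg_inj s). Qed.

Lemma card_pimg s A : #|pimg s A| = #|A|.
Proof. by rewrite card_imset //; exact: perm_inj. Qed.

Lemma pimgK s A : pimg s^-1 (pimg s A) = A.
Proof.
rewrite /pimg -imset_comp.
rewrite (eq_imset (g := id)) ?imset_id // => x /=.
by rewrite permK.
Qed.

Lemma mem_cimg s (c : {set setn}) (A : setn) : A \in c -> pimg s A \in cimg s c.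
Proof. exact: imset_f. Qed.

Lemma full_cimg s c : full_chain c -> full_chain (cimg s c).
Proof.
move=> fc; apply/andP; split.
  apply/forallP=> k.
  have -> : [set X in cimg s c | #|X| == k] = pimg s @: [set X in c | #|X| == k].
    apply/setP=> X; rewrite !inE; apply/andP/imsetP.
      case=> /imsetP [A Ac ->]; rewrite card_pimg => Ak.
      by exists A; rewrite // inE Ac.
    case=> A; rewrite inE => /andP [Ac Ak] ->.
    by split; [exact: mem_cimg | rewrite card_pimg].
  rewrite card_imset; [apply/eqP/full_one => //; rewrite -ltnS; exact: ltn_ord | exact: pimg_inj].
apply/forall_inP=> X /imsetP [A Ac ->]; apply/forall_inP=> Y /imsetP [B Bc ->].
by case/orP: (full_cmp fc Ac Bc) => H; [rewrite imsetS|rewrite orbC imsetS].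
Qed.

Lemma cc_le s A : (cc A <= cc (pimg s A))%N.
Proof.
rewrite /cc -(card_imset _ (@cimg_inj s)).
apply: subset_leq_card; apply/subsetP=> c' /imsetP [c]; rewrite inE => /andP [fc Ac] ->.
by rewrite inE full_cimg //= mem_cimg.
Qed.

Lemma cc_pimg s A : cc (pimg s A) = cc A.
Proof.
apply/eqP; rewrite eqn_leq cc_le andbT.
by have := cc_le s^-1 (pimg s A); rewrite pimgK.
Qed.

Lemma cc_same (A B : setn) : #|A| = #|B| -> cc A = cc B.
Proof.
move eK : #|A :\: B| => k; move: eK => /eqP; rewrite eqn_leq => /andP [eK _].
elim: k A eK => [|k IH] A eK eAB.
  have sAB : A \subset B by rewrite -setD_eq0 -cards_eq0; move: eK; lia.
  by rewrite (eqP (_ : A == B)) // eqEcard sAB eAB leqnn.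
case: (posnP #|A :\: B|) => [e0|].
  by apply: IH; rewrite // e0.
case/card_gt0P=> x; rewrite inE => /andP [xB xA].
have : (0 < #|B :\: A|)%N.
  have h1 := cardsID A B. have h2 := cardsID B A.
  rewrite setIC in h2. have : (0 < #|A :\: B|)%N by apply/card_gt0P; exists x; rewrite inE xB xA.
  lia.
case/card_gt0P=> y; rewrite inE => /andP [yA yB].
rewrite -(cc_pimg (tperm x y) A); apply: IH; last by rewrite card_pimg.
have sub : pimg (tperm x y) A :\: B \subset (A :\: B) :\ x.
  apply/subsetP=> z; rewrite !inE => /andP [zB /imsetP [w wA zE]].
  move: zB; rewrite zE; case: tpermP => [wx|wy|hx hy]; first by rewrite yB.
    by move=> _; move: wA; rewrite wy (negbTE yA).
  move=> zB. rewrite zB wA andbT andbT. by apply/eqP=> e; apply: hx; rewrite e.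
have := subset_leq_card sub.
have h := cardsD1 x (A :\: B); rewrite !inE xB xA /= in h.
move=> h3; apply: (leq_trans h3); rewrite -(leq_add2l 1) -h add1n; exact: eK.
Qed.

Lemma cc_sum_level k : (k <= n)%N ->
  (\sum_(B : setn | #|B| == k) cc B = NN)%N.
Proof.
move=> kn.
have e1 : forall B : setn, cc B = (\sum_(c : {set setn}) ((full_chain c && (B \in c)) : nat))%N.
  by move=> B; rewrite /cc -sum1_card big_mkcond /=;
     apply: eq_bigr => c _; rewrite inE; case: (_ && _).
rewrite (eq_bigr _ (fun B _ => e1 B)) exchange_big /NN.
rewrite -sum1_card [in RHS]big_mkcond /=.
apply: eq_bigr => c _; rewrite inE.
case fc: (full_chain c) => /=; last by rewrite big1.
rewrite -(full_one fc kn) -sum1_card [in RHS]big_mkcond /= [in LHS]big_mkcond /=.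
by apply: eq_bigr => B _; rewrite inE andbC; case: (_ == _); case: (_ \in _).
Qed.

Lemma cc_binom (A : setn) : (cc A * 'C(n, #|A|) = NN)%N.
Proof.
rewrite -(cc_sum_level (card_le_n A)).
rewrite (eq_bigr (fun _ => cc A)); last by move=> B /eqP eB; apply: cc_same; rewrite eB.
rewrite sum_nat_const mulnC; congr (_ * _)%N.
have := card_draws 'I_n #|A|; rewrite card_ord => <-.
by apply: eq_card => B; rewrite inE.
Qed.

Definition chain0 : {set setn} := [set [set j : 'I_n | (j < val k)%N] | k : 'I_n.+1].

Lemma card_lt k : (k <= n)%N -> #|[set j : 'I_n | (j < k)%N]| = k.
Proof.
move=> kn.
have -> : [set j : 'I_n | (j < k)%N] = [set widen_ord kn j | j : 'I_k].
  apply/setP=> j; rewrite inE; apply/idP/imsetP.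
    by move=> jk; exists (Ordinal jk) => //; apply: val_inj.
  by case=> j' _ ->; rewrite /= ltn_ord.
rewrite card_imset ?card_ord //.
by move=> a b /(congr1 val) /= e; apply: val_inj.
Qed.

Lemma full_chain0 : full_chain chain0.
Proof.
apply/andP; split.
  apply/forallP=> k; apply/cards1P.
  exists [set j : 'I_n | (j < val k)%N]; apply/setP=> X; rewrite !inE.
  apply/andP/eqP.
    have kn : (val k <= n)%N by rewrite -ltnS ltn_ord.
    case=> /imsetP [k' _ ->]; have k'n : (val k' <= n)%N by rewrite -ltnS ltn_ord.
    rewrite card_lt // => /eqP e.
    by apply/setP=> j; rewrite !inE e.
  move=> ->; split; first exact: imset_f.
  by rewrite card_lt // -ltnS ltn_ord.
apply/forall_inP=> X /imsetP [a _ ->]; apply/forall_inP=> Y /imsetP [b _ ->].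
case: (leqP a b) => h.
  by apply/orP; left; apply/subsetP=> j; rewrite !inE => /leq_trans; apply.
apply/orP; right; apply/subsetP=> j; rewrite !inE => /leq_trans; apply; exact: ltnW.
Qed.

Lemma NN_gt0 : (0 < NN)%N.
Proof. by apply/card_gt0P; exists chain0; rewrite inE full_chain0. Qed.

End Comb.


Section Win.
Variables (n q : nat) (Fp : {set {set 'I_n}}).
Notation setn := {set 'I_n}.

Definition rk (c : {set setn}) (D : setn) : nat := #|[set E in c :&: Fp | #|E| < #|D|]|.

Lemma rk_le c (D E : setn) : #|E| <= #|D| -> rk c E <= rk c D.
Proof.
move=> h; apply: subset_leq_card; apply/subsetP=> X; rewrite !inE => /andP [-> h'].
by rewrite (leq_trans h') .
Qed.

Lemma rk_lt c (D E : setn) : E \in c :&: Fp -> #|E| < #|D| -> rk c E < rk c D.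
Proof.
move=> ES h; apply: proper_card; apply/properP; split.
  apply/subsetP=> X; rewrite !inE => /andP [-> h'] /=.
  exact: ltn_trans h' h.
by exists E; rewrite !inE -?andbA; move: ES; rewrite inE => /andP [-> ->] //=; rewrite ltnn.
Qed.

Lemma rk_inj c (D E : setn) : full_chain c -> D \in c :&: Fp -> E \in c :&: Fp ->
  rk c D = rk c E -> D = E.
Proof.
move=> fc DS ES e.
have eDE : #|D| = #|E|.
  case: (ltngtP #|D| #|E|) => // h.
    by have := rk_lt DS h; rewrite e ltnn.
  by have := rk_lt ES h; rewrite e ltnn.
move: DS ES; rewrite !inE => /andP [Dc _] /andP [Ec _].
exact: full_eq_size fc Dc Ec eDE.
Qed.

Lemma rk_bound c (D : setn) : D \in c :&: Fp -> rk c D < #|c :&: Fp|.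
Proof.
move=> DS; apply: proper_card; apply/properP; split.
  by apply/subsetP=> X; rewrite inE => /andP [].
by exists D => //; rewrite inE ltnn andbF.
Qed.

Lemma rk_surj c r : full_chain c -> r < #|c :&: Fp| ->
  exists2 E, E \in c :&: Fp & rk c E = r.
Proof.
move=> fc rS.
set s1 := map (rk c) (enum (c :&: Fp)).
have u1 : uniq s1.
  rewrite map_inj_in_uniq ?enum_uniq // => D E; rewrite !mem_enum.
  by move=> DS ES; apply: rk_inj.
have sub : {subset s1 <= iota 0 #|c :&: Fp|}.
  move=> x /mapP [D]; rewrite mem_enum => DS ->.
  by rewrite mem_iota add0n rk_bound.
have [|_ eq] := uniq_min_size u1 sub.
  by rewrite size_iota size_map -cardE.
have : (r \in iota 0 #|c :&: Fp|) by rewrite mem_iota add0n.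
rewrite -eq => /mapP [E]; rewrite mem_enum => ES ->.
by exists E.
Qed.
Lemma rk_small c m : full_chain c -> #|[set D in c :&: Fp | rk c D < m]| <= m.
Proof.
move=> fc.
set s1 := map (rk c) (enum [set D in c :&: Fp | rk c D < m]).
have u1 : uniq s1.
  rewrite map_inj_in_uniq ?enum_uniq // => D E; rewrite !mem_enum !inE.
  move=> /andP [DS _] /andP [ES _]; apply: rk_inj; rewrite ?inE //.
have sub : {subset s1 <= iota 0 m}.
  move=> x /mapP [D0]; rewrite mem_enum inE => /andP [_ h] ->.
  by rewrite mem_iota add0n.
by have := uniq_leq_size u1 sub; rewrite size_map size_iota -cardE.
Qed.

Definition window (m : mchain n q) : bool :=
  [forall k : 'I_q, forall k' : 'I_q, rk m.1 (m.2 k) + k == rk m.1 (m.2 k') + k'].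

Definition M0 : {set mchain n q} := [set m : mchain n q | marked_chain Fp m && window m].

Lemma window_uniq (m m' : mchain n q) (i : 'I_q) : m \in M0 -> m' \in M0 ->
  m.1 = m'.1 -> m.2 i = m'.2 i -> m = m'.
Proof.
case: m => c Q; case: m' => c' Q' /=; rewrite !inE /=.
move=> /andP [/and3P [fc _ /forallP HQ] /forallP W] /andP [/and3P [_ _ /forallP HQ'] /forallP W'] ec eQ.
subst c'; congr pair; apply/ffunP=> k.
apply: (rk_inj fc).
- by case/andP: (HQ k) => a b; rewrite inE a b.
- by case/andP: (HQ' k) => a b; rewrite inE a b.
have := eqP (forallP (W k) i). have := eqP (forallP (W' k) i). rewrite eQ /=. lia.
Qed.

Lemma window_qchain (c : {set setn}) (Q : {ffun 'I_q -> setn}) : full_chain c ->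
  (forall k, Q k \in c :&: Fp) -> window (c, Q) -> qchain Q.
Proof.
move=> fc HQ /forallP W; apply/forallP=> i; apply/forallP=> j; apply/implyP=> ij.
have e := eqP (forallP (W i) j); simpl in e.
have lt : rk c (Q j) < rk c (Q i) by lia.
have sz : #|Q j| < #|Q i|.
  by rewrite ltnNge; apply/negP=> h; have := rk_le c h; rewrite leqNgt lt.
have Qic : Q i \in c by move: (HQ i); rewrite inE => /andP [].
have Qjc : Q j \in c by move: (HQ j); rewrite inE => /andP [].
rewrite properEcard sz andbT.
case/orP: (full_cmp fc Qjc Qic) => // h.
by have := subset_leq_card h; rewrite leqNgt sz.
Qed.
Definition QD (c : {set setn}) (D : setn) : {ffun 'I_q -> setn} :=
  [ffun k : 'I_q => odflt set0 [pick E in c :&: Fp | rk c E == rk c D - k]].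

Lemma QD_spec c D (k : 'I_q) : full_chain c -> D \in c :&: Fp ->
  QD c D k \in c :&: Fp /\ rk c (QD c D k) = rk c D - k.
Proof.
move=> fc DS; rewrite ffunE; case: pickP => [E /andP [ES /eqP e] | none] //=.
have [E ES e] := @rk_surj c (rk c D - k) fc (leq_ltn_trans (leq_subr _ _) (rk_bound DS)).
by have := none E; rewrite ES e eqxx.
Qed.

Lemma count_chain c : 0 < q -> full_chain c ->
  #|c :&: Fp| <= #|[set m in M0 | m.1 == c]| + q.-1.
Proof.
move=> q0 fc.
set B := [set D : setn | q.-1 <= rk c D].
have h := cardsID B (c :&: Fp).
have h1 : #|(c :&: Fp) :\: B| <= q.-1.
  have -> : (c :&: Fp) :\: B = [set D in c :&: Fp | rk c D < q.-1].
    by apply/setP=> D; rewrite !inE ltnNge andbC.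
  exact: rk_small.
have h2 : #|(c :&: Fp) :&: B| <= #|[set m in M0 | m.1 == c]|.
  have inj : {in (c :&: Fp) :&: B &, injective (fun D => (c, QD c D) : mchain n q)}.
    move=> D D'; rewrite !inE => /andP [/andP [Dc DF] _] /andP [/andP [D'c D'F] _] [] e.
    have DS : D \in c :&: Fp by rewrite inE Dc DF.
    have D'S : D' \in c :&: Fp by rewrite inE D'c D'F.
    pose k0 : 'I_q := Ordinal q0.
    have [a1 b1] := QD_spec k0 fc DS.
    have [a2 b2] := QD_spec k0 fc D'S.
    have E1 : QD c D k0 = D by apply: (rk_inj fc) => //; rewrite b1 subn0.
    have E2 : QD c D' k0 = D' by apply: (rk_inj fc) => //; rewrite b2 subn0.
    by rewrite -E1 -E2 e.
  rewrite -(card_in_imset inj); apply: subset_leq_card; apply/subsetP=> m.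
  case/imsetP=> D; rewrite !inE => /andP [/andP [Dc DF] hD] -> /=.
  have DS : D \in c :&: Fp by rewrite inE Dc DF.
  rewrite eqxx andbT; apply/andP; split.
    apply/and3P; split => //=.
      apply: (window_qchain fc); first by move=> k; have [] := QD_spec k fc DS.
      apply/forallP=> k; apply/forallP=> k'.
      have [_ e1] := QD_spec k fc DS. have [_ e2] := QD_spec k' fc DS.
      have kq : k <= q.-1 by rewrite -ltnS prednK // ltn_ord.
      have k'q : k' <= q.-1 by rewrite -ltnS prednK // ltn_ord.
      rewrite /= e1 e2 !subnK //; [exact: leq_trans k'q hD | exact: leq_trans kq hD].
    apply/forallP=> k; have [] := QD_spec k fc DS.
    by rewrite inE => /andP [-> ->].
  apply/forallP=> k; apply/forallP=> k'.
  have [_ e1] := QD_spec k fc DS. have [_ e2] := QD_spec k' fc DS.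
  have kq : k <= q.-1 by rewrite -ltnS prednK // ltn_ord.
  have k'q : k' <= q.-1 by rewrite -ltnS prednK // ltn_ord.
  rewrite /= e1 e2 !subnK //; [exact: leq_trans k'q hD | exact: leq_trans kq hD].
rewrite -h; exact: leq_add.
Qed.
Lemma sum_chains :
  \sum_(c : {set setn} | full_chain c) #|c :&: Fp| = \sum_(A in Fp) cc A.
Proof.
have e1 : forall A : setn, cc A = \sum_(c : {set setn} | full_chain c) (A \in c : nat).
  move=> A; rewrite /cc -sum1_card [in LHS]big_mkcond [in RHS]big_mkcond /=.
  by apply: eq_bigr => c _; rewrite inE; case: (full_chain c); case: (A \in c).
rewrite (eq_bigr _ (fun A _ => e1 A)) exchange_big /=.
apply: eq_bigr => c _.
rewrite -sum1_card [in LHS]big_mkcond [in RHS]big_mkcond /=.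
by apply: eq_bigr => A _; rewrite inE; case: (A \in c); case: (A \in Fp).
Qed.

Lemma card_M0_part :
  \sum_(c : {set setn} | full_chain c) #|[set m in M0 | m.1 == c]| <= #|M0|.
Proof.
rewrite -[#|M0|]sum1_card (partition_big (fun m : mchain n q => m.1) xpredT) //=.
rewrite [X in _ <= X](bigID (fun c => full_chain c)) /=.
apply: leq_trans (leq_addr _ _).
apply: leq_sum => c _; rewrite -sum1_card.
by apply: eq_leq; apply: eq_bigl => m; rewrite inE.
Qed.

Lemma M0_count : 0 < q -> \sum_(A in Fp) cc A <= #|M0| + q.-1 * NN n.
Proof.
move=> q0; rewrite -sum_chains.
apply: (@leq_trans (\sum_(c : {set setn} | full_chain c) (#|[set m in M0 | m.1 == c]| + q.-1))).
  by apply: leq_sum => c fc; apply: count_chain.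
rewrite big_split /= leq_add ?card_M0_part //.
rewrite sum_nat_const mulnC leq_mul2l; apply/orP; right.
by apply: eq_leq; apply: eq_card => c; rewrite inE.
Qed.
End Win.


Lemma sum_sub (T : finType) (A B : {set T}) (f : T -> nat) :
  A \subset B -> (\sum_(i in A) f i <= \sum_(i in B) f i)%N.
Proof.
move=> sAB; rewrite [X in (_ <= X)%N](big_setID A) /=.
by rewrite (setIidPr sAB) leq_addr.
Qed.

Section Clean.
Variables (R : realType) (n q : nat) (delta : R) (w : {set 'I_n} -> nat).
Local Open Scope ring_scope.
Hypothesis delta_ge0 : 0 <= delta.

Definition pairs (M : {set mchain n q}) : {set {set 'I_n} * 'I_q} :=
  [set p | Mat M p.1 p.2 != set0].

Definition stable (M : {set mchain n q}) :=
  forall F i, Mat M F i != set0 -> delta * (w F)%:R < (#|Mat M F i|)%:R.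

Lemma pairs_mono (M1 M2 : {set mchain n q}) : M1 \subset M2 -> pairs M1 \subset pairs M2.
Proof.
move=> s; apply/subsetP=> p; rewrite !inE; apply: contra => /eqP e.
apply/eqP/setP=> m; rewrite !inE; apply/negbTE/negP=> /andP [mM e'].
have : m \in Mat M2 p.1 p.2 by rewrite inE e' (subsetP s).
by rewrite e inE.
Qed.

Lemma clean (M : {set mchain n q}) : exists M' : {set mchain n q}, [/\ M' \subset M, stable M' &
  (#|M|)%:R <= (#|M'|)%:R + delta * (\sum_(p in pairs M :\: pairs M') w p.1)%N%:R].
Proof.
move: {2}#|M| (leqnn #|M|) => k; elim: k M => [|k IH] M hM.
- exists M; split => //.
    move=> F i /set0Pn [m]; rewrite inE => /andP [mM _].
    by move: hM; rewrite leqn0 cards_eq0 => /eqP M0; rewrite M0 inE in mM.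
  by rewrite setDv big_set0 mulr0 addr0.
case: (boolP [exists p : {set 'I_n} * 'I_q,
          (Mat M p.1 p.2 != set0) && ~~ (delta * (w p.1)%:R < (#|Mat M p.1 p.2|)%:R)]).
- case/existsP=> [[F i]] /= /andP [ne bad].
  set M1 := M :\: Mat M F i.
  have sub : Mat M F i \subset M by apply/subsetP=> m; rewrite inE => /andP [].
  have cM : (#|M1| + #|Mat M F i| = #|M|)%N.
    by rewrite /M1 cardsDS // subnK // subset_leq_card.
  have cM1 : (#|M1| <= k)%N.
    have : (0 < #|Mat M F i|)%N by rewrite card_gt0.
    move: hM; rewrite -cM; lia.
  have [M' [s1 st h1]] := IH M1 cM1.
  exists M'; split => //.
    by apply: subset_trans s1 _; apply: subsetDl.
  have FiM1 : Mat M1 F i = set0.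
    apply/setP=> m; rewrite !inE; by case: (m \in M); case: (m.2 i == F).
  have Fin : (F, i) \in pairs M :\: pairs M'.
    rewrite !inE /= ne andbT negbK; apply/eqP/setP=> m; rewrite !inE.
    apply/negbTE/negP=> /andP [mM' e].
    have : m \in Mat M1 F i by rewrite inE e (subsetP s1).
    by rewrite FiM1 inE.
  have sub2 : pairs M1 :\: pairs M' \subset (pairs M :\: pairs M') :\ (F, i).
    apply/subsetP=> p; rewrite !inE => /andP [np pM1].
    rewrite np /=; apply/andP; split.
      by apply/negP=> /eqP ep; move: pM1; rewrite ep /= FiM1 eqxx.
    move: pM1; case/set0Pn=> m; rewrite !inE => /andP [/andP [_ mM] em].
    by apply/set0Pn; exists m; rewrite inE mM em.
  rewrite (bigD1 (F, i)) //= natrD mulrDr.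
  have hb : (#|Mat M F i|)%:R <= delta * (w F)%:R by rewrite leNgt.
  have hs : (\sum_(p in pairs M1 :\: pairs M') w p.1 <=
             \sum_(p in (pairs M :\: pairs M') :\ (F, i)) w p.1)%N by exact: sum_sub.
  have hs' : delta * (\sum_(p in pairs M1 :\: pairs M') w p.1)%N%:R <=
             delta * (\sum_(p in (pairs M :\: pairs M') :\ (F, i)) w p.1)%N%:R.
    by apply: ler_wpM2l => //; rewrite ler_nat.
  have e2 : \sum_(i0 | (i0 \in pairs M :\: pairs M') && (i0 != (F, i))) w i0.1 =
            \sum_(p in (pairs M :\: pairs M') :\ (F, i)) w p.1.
    by apply: eq_bigl => p; rewrite !inE andbC.
  rewrite e2; rewrite -cM natrD.
  move: h1 hb hs'; set a := (#|M1|)%:R; set b := (#|Mat M F i|)%:R. lra.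
- rewrite negb_exists => /forallP H.
  exists M; split => //.
    move=> F i ne; have := H (F, i); rewrite /= ne /=; by rewrite negbK.
  by rewrite setDv big_set0 mulr0 addr0.
Qed.
End Clean.


Section Final.
Variables (n q : nat) (Fp : {set {set 'I_n}}).
Notation setn := {set 'I_n}.

Lemma fst_inj (M : {set mchain n q}) F i : M \subset M0 q Fp ->
  {in Mat M F i &, injective (fun m : mchain n q => m.1)}.
Proof.
move=> s m m'; rewrite !inE => /andP [mM /eqP e] /andP [m'M /eqP e'] e1.
apply: (window_uniq (i := i) (subsetP s _ mM) (subsetP s _ m'M)) => //.
by rewrite e e'.
Qed.

Lemma Mat_fst_sub (M : {set mchain n q}) F i : M \subset M0 q Fp ->
  [set m.1 | m in Mat M F i] \subset [set c | full_chain c && (F \in c)].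
Proof.
move=> s; apply/subsetP=> c /imsetP [m]; rewrite inE => /andP [mM /eqP e] ->.
have := subsetP s _ mM; rewrite inE => /andP [/and3P [fc _ /forallP H] _].
by rewrite inE fc /= -e; case/andP: (H i).
Qed.

Lemma Mat_le_cc (M : {set mchain n q}) F i : M \subset M0 q Fp ->
  (#|Mat M F i| <= cc F)%N.
Proof.
move=> s; rewrite -(card_in_imset (fst_inj s)); exact: subset_leq_card (Mat_fst_sub _ _ s).
Qed.

Lemma cond_ge (R : realType) (M : {set mchain n q}) F i (W : {set setn}) :
  M \subset M0 q Fp ->
  (forall m, m \in Mat M F i -> exists j : 'I_q, m.2 j \in W) ->
  ((#|Mat M F i|)%:R / (cc F)%:R <= cond_prob R W F)%R.
Proof.
move=> s cov; rewrite /cond_prob -/(cc F).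
apply: ler_wpM2r; first by rewrite invr_ge0 ler0n.
rewrite ler_nat -(card_in_imset (fst_inj s)); apply: subset_leq_card.
apply/subsetP=> c /imsetP [m mMat ->].
have [j mj] := cov m mMat.
move: mMat; rewrite inE => /andP [mM /eqP e].
have := subsetP s _ mM; rewrite inE => /andP [/and3P [fc _ /forallP H] _].
rewrite inE fc /= -e; case/andP: (H i) => _ -> /=.
by apply/existsP; exists (m.2 j); rewrite mj; case/andP: (H j).
Qed.

Lemma robust_of (R : realType) (delta : R) (M : {set mchain n q}) F :
  M \subset M0 q Fp -> stable delta (@cc n) M -> robust delta M F.
Proof.
move=> s st i.
have key : forall W : {set setn}, Mat M F i != set0 ->
    (forall m, m \in Mat M F i -> exists j : 'I_q, m.2 j \in W) ->
    (delta < cond_prob R W F)%R.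
  move=> W ne cov.
  have h1 := st F i ne.
  have h2 := cond_ge R s cov.
  have cpos : (0 < cc F)%N.
    apply: leq_trans (Mat_le_cc F i s); by rewrite card_gt0.
  apply: (lt_le_trans _ h2); rewrite ltr_pdivlMr ?ltr0n //.
split.
  by case=> ne [W [_ cov le]]; have := key W ne cov; rewrite ltNge le.
by case=> ne [W [_ cov le]]; have := key W ne cov; rewrite ltNge le.
Qed.

Lemma min_binom_le (D : setn) : D \in Fp -> (min_binom Fp <= 'C(n, #|D|))%N.
Proof.
move=> DF; rewrite /min_binom.
have : D \in index_enum (finset_set_of__canonical__fintype_Finite 'I_n) by rewrite mem_index_enum.
elim: (index_enum _) => [|y r IH] //.
rewrite inE big_cons; case/orP => [/eqP <- | Dr]; first by rewrite DF geq_minl.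
case: (y \in Fp); last exact: IH.
exact: leq_trans (geq_minr _ _) (IH Dr).
Qed.

Lemma Lset_bound (M : {set mchain n q}) (i : 'I_q) : M \subset M0 q Fp ->
  (#|M| * min_binom Fp <= #|Lset M i| * NN n)%N.
Proof.
move=> s.
have e : #|M| = (\sum_(D : setn) #|Mat M D i|)%N.
  rewrite -sum1_card (partition_big (fun m : mchain n q => m.2 i) xpredT) //=.
  by apply: eq_bigr => D _; rewrite -sum1_card; apply: eq_bigl => m; rewrite inE.
rewrite e big_distrl /= (bigID (fun D => D \in Lset M i)) /=.
rewrite [X in (_ + X <= _)%N]big1 ?addn0; last first.
  move=> D DL; suff -> : Mat M D i = set0 by rewrite cards0.
  apply/setP=> m; rewrite !inE; apply/negbTE/negP=> /andP [mM /eqP em].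
  by move: DL; rewrite inE => /existsP; apply; exists m; rewrite mM em eqxx.
rewrite -sum_nat_const; apply: leq_sum => D DL.
have DF : D \in Fp.
  move: DL; rewrite inE => /existsP [m /andP [mM /eqP <-]].
  by have := subsetP s _ mM; rewrite inE => /andP [/and3P [_ _ /forallP H] _]; case/andP: (H i).
apply: (@leq_trans (cc D * 'C(n, #|D|))); last by rewrite cc_binom.
by apply: leq_mul; [exact: Mat_le_cc | exact: min_binom_le].
Qed.

Lemma pairs_sub (M : {set mchain n q}) : M \subset M0 q Fp ->
  pairs M \subset [set p : setn * 'I_q | p.1 \in Fp].
Proof.
move=> s; apply/subsetP=> [[D j]]; rewrite !inE /= => /set0Pn [m].
rewrite inE => /andP [mM /eqP <-].
by have := subsetP s _ mM; rewrite inE => /andP [/and3P [_ _ /forallP H] _]; case/andP: (H j).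
Qed.

Lemma sum_pairs (P : {set setn * 'I_q}) : P \subset [set p : setn * 'I_q | p.1 \in Fp] ->
  (\sum_(p in P) cc p.1 <= q * \sum_(A in Fp) cc A)%N.
Proof.
move=> sP; apply: leq_trans (sum_sub _ sP) _.
have -> : (\sum_(p in [set p : setn * 'I_q | p.1 \in Fp]) cc p.1 =
          \sum_(A in Fp) \sum_(j : 'I_q) cc A)%N.
  by rewrite pair_big /=; apply: eq_bigl => p; rewrite inE andbT.
rewrite big_distrr /=; apply: eq_leq; apply: eq_bigr => A _.
by rewrite sum_nat_const card_ord.
Qed.

Lemma sum_cc (R : realType) :
  ((\sum_(A in Fp) cc A)%N%:R = (NN n)%:R * lubell R Fp :> R)%R.
Proof.
rewrite /lubell natr_sum big_distrr /=; apply: eq_bigr => A _.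
have hC : ('C(n, #|A|)%:R != 0 :> R)%R by rewrite pnatr_eq0 -lt0n bin_gt0 card_le_n.
by rewrite -(cc_binom A) natrM mulfK.
Qed.
End Final.

Unset Implicit Arguments.
Local Open Scope ring_scope.

Theorem theorem4p12 (R : realType) (d : Order.disp_t) (P : finPOrderType d) :
  tree_poset (P := P) ->
  forall (q : nat) (eps : R), (0 < q)%N -> 0 < eps ->
  exists delta : R, 0 < delta /\
  forall (n : nat) (F : {set {set 'I_n}}),
    F \subset Btilde R n ->
    (q.-1)%:R + eps <= lubell R F ->
    exists Ms : nat -> {set mchain n q},
      [/\ forall j, (j < #|P|)%N -> Ms j.+1 \subset Ms j,
          forall j, (j <= #|P|)%N -> forall m, m \in Ms j -> marked_chain F m
        & forall j, (0 < j <= #|P|)%N ->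
            (forall m, m \in Ms j -> forall k : 'I_q,
               robust delta (Ms j.-1) (m.2 k)) /\
            (forall i : 'I_q,
               (2 * eps / (3 * q%:R)) * (min_binom F)%:R <= (#|Lset (Ms j) i|)%:R)].
Proof.
move=> _ q eps q0 eps0.
have qR : (1 <= q%:R :> R) by rewrite ler1n.
set t := eps / (3 * (q%:R + eps)).
have t0 : 0 < t by rewrite divr_gt0 // mulr_gt0 // ltr_pwDr.
have tE : t * (3 * (q%:R + eps)) = eps by rewrite mulfVK // mulf_neq0 // gt_eqF // ltr_pwDr.
exists (t / q%:R); split; first by rewrite divr_gt0 // ltr0n.
move=> n F _ hL.
have d0 : 0 <= t / q%:R by rewrite ltW // divr_gt0 // ltr0n.
have [M' [s st h]] := clean (@cc n) d0 (M0 q F).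
exists (fun _ => M'); split.
- by move=> j _; exact: subxx.
- move=> j _ m mM.
  by have := subsetP s _ mM; rewrite inE => /andP [].
move=> j _; split.
  by move=> m _ k; apply: (robust_of _ s st).
move=> i.
have hA := M0_count F q0.
have hB := sum_pairs (subset_trans (subsetDl _ (pairs M')) (pairs_sub (subxx (M0 q F)))).
have hC := Lset_bound i s.
have hN := NN_gt0 n.
have hS := sum_cc F R.
have eq1 : (q.-1)%:R = q%:R - 1 :> R by rewrite -{2}(prednK q0) mulrSr addrK.
move: hA hB hC; rewrite -!(ler_nat R) !natrD !natrM eq1 hS => hA hB hC.
rewrite eq1 in hL.
move: h hA hB hC hN qR tE t0 eps0 hL.
set S := (\sum_(p in _) _)%N.
set a := (#|M0 q F|)%:R; set b := (#|M'|)%:R; set mb := (min_binom F)%:R.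
set L := (#|Lset M' i|)%:R; set mu := lubell R F.
rewrite -(ltr_nat R).
set N := (NN n)%:R; set X := (S%:R : R); set Q := q%:R.
have mb0 : 0 <= mb by rewrite /mb ler0n.
have X0 : 0 <= X by rewrite /X ler0n.
have Q0 : 0 < Q by rewrite /Q ltr0n.
move=> h hA hB hC hN qR tE t0 eps0 hL.
clearbody t S a b mb L mu N X Q.
have h' : a <= b + t * (N * mu).
  apply: (le_trans h); rewrite lerD2l.
  have -> : t * (N * mu) = t / Q * (Q * (N * mu)) by field; rewrite gt_eqF.
  by apply: ler_wpM2l => //; rewrite ltW // divr_gt0.
have t1 : t < 1 by nra.
have mu1 : (1 - t) * (Q - 1 + eps) <= (1 - t) * mu.
  by apply: ler_wpM2l; lra.
have hb : 2 / 3 * eps * N <= b.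
  have e3 : t * (Q + eps) = eps / 3 by rewrite -[in RHS]tE; field.
  have : t * (Q - 1 + eps) <= t * (Q + eps) by apply: ler_wpM2l; lra.
  have : N * ((1 - t) * (Q - 1 + eps)) <= N * ((1 - t) * mu) by apply: ler_wpM2l => //; lra.
  nra.
have hL2 : 2 / 3 * eps * mb <= L.
  rewrite -(ler_pM2r hN).
  apply: le_trans hC.
  have : 2 / 3 * eps * N * mb <= b * mb by apply: ler_wpM2r.
  lra.
apply: le_trans hL2.
apply: ler_wpM2r => //.
rewrite ler_pdivrMr ?mulr_gt0 //; nra.
Qed.
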